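(* Let $m\ge 1$ and $d=2^{2m}-1$. If there exists a $(2^{2m},m,p)$-QRA coding with $p>1/2$, then there exist vectors $\vec s_1,\dots,\vec s_{2^{2m}}\in\mathbb{R}^{d}$ and reals $c_1,\dots,c_{2^{2m}}$ such that for every $w\in\{0,1\}^{2^{2m}}$ the set $$D_w=\{\vec r\in\mathbb{R}^{d} : \vec r\cdot\vec s_i>c_i \text{ for all } i \text{ with } w_i=0,\ \vec r\cdot\vec s_i<c_i \text{ for all } i \text{ with } w_i=1\}$$ is nonempty (indeed it contains the Bloch vector of an $m$-qubit state). In other words, $\mathbb{R}^{2^{2m}-1}$ is divided into $2^{2^{2m}}$ distinct nonempty regions by the $2^{2m}$ hyperplanes $\{\vec r:\vec r\cdot\vec s_i=c_i\}$.
   Context: An $(n,m,p)$-quantum random access (QRA) coding is a map assigning to each $n$-bit string $x\in\{0,1\}^n$ an $m$-qubit state $\rho_x$ (a positive semidefinite trace-one operator on $\mathbb{C}^{2^m}$) such that for every $i\in\{1,\dots,n\}$ there is a POVM $E^i=\{E^i_0,E^i_1\}$ (i.e. $E^i_0,E^i_1$ are positive semidefinite Hermitian operators on $\mathbb{C}^{2^m}$ with $E^i_0+E^i_1=I$) satisfying $\mathrm{Tr}(E^i_{x_i}\rho_x)\ge p$ for all $x\in\{0,1\}^n$, where $x_i$ is the $i$-th bit of $x$. Bloch vectors of $N$-level states ($N=2^m$): fix Hermitian traceless matrices $\lambda_1,\dots,\lambda_{N^2-1}$ with $\mathrm{Tr}(\lambda_i\lambda_j)=2\delta_{ij}$; every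 $N\times N$ density matrix can be written uniquely as $\rho=\frac1N I_N+\frac12\sum_{k=1}^{N^2-1}r_k\lambda_k$ with $\vec r=(r_1,\dots,r_{N^2-1})\in\mathbb{R}^{N^2-1}$, the Bloch vector of $\rho$. *)

(* Defs.v *)
From HB Require Import structures.
From mathcomp Require Import all_boot all_order all_algebra.
From mathcomp Require Import complex.
From mathcomp Require Import reals.
Set Implicit Arguments. Unset Strict Implicit. Unset Printing Implicit Defensive.
Import Order.TTheory GRing.Theory Num.Theory.
Local Open Scope ring_scope.
Local Open Scope complex_scope.

Section Defs.
Variable R : realType.
Local Notation C := R[i].

Definition adj {N : nat} (A : 'M[C]_N) : 'M[C]_N := (map_mx conjc A)^T.

Definition hermitian {N : nat} (A : 'M[C]_N) : Prop := adj A = A.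

Definition psd {N : nat} (A : 'M[C]_N) : Prop :=
  hermitian A /\
  forall v : 'cV[C]_N, 0 <= ((map_mx conjc v)^T *m A *m v) 0 0.

Definition density {N : nat} (rho : 'M[C]_N) : Prop := psd rho /\ \tr rho = 1.

Definition povm2 {N : nat} (E0 E1 : 'M[C]_N) : Prop :=
  psd E0 /\ psd E1 /\ E0 + E1 = 1%:M.

Definition QRA (n m : nat) (p : R) : Prop :=
  exists rho : {ffun 'I_n -> bool} -> 'M[C]_(2 ^ m),
    (forall x, density (rho x)) /\
    forall i : 'I_n, exists E0 E1 : 'M[C]_(2 ^ m),
      povm2 E0 E1 /\
      forall x : {ffun 'I_n -> bool},
        p <= complex.Re (\tr ((if x i then E1 else E0) *m rho x)).

Definition bloch_basis {N : nat} (lam : 'I_(N ^ 2 - 1) -> 'M[C]_N) : Prop :=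
  (forall k, hermitian (lam k)) /\ (forall k, \tr (lam k) = 0) /\
  (forall k l, \tr (lam k *m lam l) = (if k == l then 2 else 0)).

Definition is_bloch_vector {N : nat} (lam : 'I_(N ^ 2 - 1) -> 'M[C]_N)
    (rho : 'M[C]_N) (r : 'I_(N ^ 2 - 1) -> R) : Prop :=
  rho = (N%:R)^-1 *: 1%:M + 2^-1 *: \sum_k ((r k)%:C *: lam k).

Definition dotv {d : nat} (r s : 'I_d -> R) : R := \sum_k r k * s k.

Definition region {d n : nat} (s : 'I_n -> 'I_d -> R) (c : 'I_n -> R)
    (w : {ffun 'I_n -> bool}) (r : 'I_d -> R) : Prop :=
  forall i : 'I_n,
    (w i = false -> dotv r (s i) > c i) /\ (w i = true -> dotv r (s i) < c i).

End Defs.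

(* Main.v *)
Require Import Defs.
From HB Require Import structures.
From mathcomp Require Import all_boot all_order all_algebra.
From mathcomp Require Import complex.
From mathcomp Require Import reals.
From mathcomp Require Import lra.
Import Order.TTheory GRing.Theory Num.Theory.
Local Open Scope ring_scope.
Local Open Scope complex_scope.

Lemma trl_lem (R : realType) (N : nat) (lam : 'I_(N ^ 2 - 1) -> 'M[R[i]]_N) :
  bloch_basis lam -> forall (a : 'I_(N ^ 2 - 1) -> R[i]) b l,
    \tr ((\sum_k a k *: lam k + b *: 1%:M) *m lam l) = a l * 2.
Proof.
move=> [hH [ht ho]] a b l; rewrite mulmxDl mulmx_suml mxtraceD raddf_sum /=.
rewrite -scalemxAl mul1mx mxtraceZ ht mulr0 addr0.
rewrite (bigD1 l) //= big1 ?addr0 => [|k /negbTE kl].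
  by rewrite -scalemxAl mxtraceZ ho eqxx.
by rewrite -scalemxAl mxtraceZ ho kl mulr0.
Qed.

Lemma tr1_lem (R : realType) (N : nat) (lam : 'I_(N ^ 2 - 1) -> 'M[R[i]]_N) :
  bloch_basis lam -> forall (a : 'I_(N ^ 2 - 1) -> R[i]) b,
    \tr (\sum_k a k *: lam k + b *: 1%:M) = b * N%:R.
Proof.
move=> [hH [ht ho]] a b; rewrite mxtraceD raddf_sum /= big1 ?add0r => [|k _].
  by rewrite mxtraceZ mxtrace1.
by rewrite mxtraceZ ht mulr0.
Qed.

Lemma tr_adj (R : realType) N (A : 'M[R[i]]_N) : \tr (adj A) = (\tr A)^*.
Proof.
by rewrite /adj mxtrace_tr /mxtrace rmorph_sum; apply: eq_bigr => i _; rewrite mxE.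
Qed.

Lemma adjM (R : realType) N (A B : 'M[R[i]]_N) : adj (A *m B) = adj B *m adj A.
Proof. by rewrite /adj map_mxM trmx_mul. Qed.

Lemma conj_real (R : realType) (x : R[i]) : x^* = x -> x = (complex.Re x)%:C.
Proof.
case: x => a b /= [] h; congr Complex; lra.
Qed.

Lemma ReMr (R : realType) (x : R) (y : R[i]) : complex.Re (x%:C * y) = x * complex.Re y.
Proof. by case: y => a b /=; rewrite mul0r subr0. Qed.

Lemma ReD (R : realType) (x y : R[i]) : complex.Re (x + y) = complex.Re x + complex.Re y.
Proof. by case: x; case: y. Qed.

Lemma ReB (R : realType) (x y : R[i]) : complex.Re (x - y) = complex.Re x - complex.Re y.
Proof. by case: x; case: y. Qed.

Lemma Re_sum (R : realType) (I : finType) (F : I -> R[i]) :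
  complex.Re (\sum_i F i) = \sum_i complex.Re (F i).
Proof.
by apply: (big_morph (@complex.Re R)) => [x y|]; [exact: ReD|].
Qed.
Lemma span_lam (R : realType) (N : nat) (hN : (0 < N)%N)
  (lam : 'I_(N ^ 2 - 1) -> 'M[R[i]]_N) : bloch_basis lam ->
  forall M : 'M[R[i]]_N, exists (a : 'I_(N ^ 2 - 1) -> R[i]) (b : R[i]),
    M = \sum_k a k *: lam k + b *: 1%:M.
Proof.
move=> [hH [ht ho]] M.
set d := (N ^ 2 - 1)%N.
have hd : (d + 1 = N * N)%N by rewrite /d subnK ?expn_gt0 ?hN // mulnn.
pose X : 'M[R[i]]_(d, N * N) := \matrix_(k < d) mxvec (lam k).
pose B := col_mx X (mxvec (1%:M : 'M[R[i]]_N)).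
have key : forall v : 'rV_(d + 1), v *m B =
   mxvec (\sum_k (lsubmx v) 0 k *: lam k + (rsubmx v) 0 0 *: 1%:M).
  move=> v; rewrite -{1}(hsubmxK v) mul_row_col mulmx_sum_row linearD linear_sum /=.
  rewrite linearZ /= [rsubmx v]mx11_scalar mul_scalar_mx; congr (_ + _); last by rewrite [in RHS]mxE.
  by apply: eq_bigr => k _; rewrite rowK linearZ.
have trl : forall (a : 'I_d -> R[i]) b l,
    \tr ((\sum_k a k *: lam k + b *: 1%:M) *m lam l) = a l * 2.
  move=> a b l; rewrite mulmxDl mulmx_suml mxtraceD raddf_sum /=.
  rewrite -scalemxAl mul1mx mxtraceZ ht mulr0 addr0.
  rewrite (bigD1 l) //= big1 ?addr0 => [|k /negbTE kl].
    by rewrite -scalemxAl mxtraceZ ho eqxx.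
  by rewrite -scalemxAl mxtraceZ ho kl mulr0.
have tr1 : forall (a : 'I_d -> R[i]) b,
    \tr (\sum_k a k *: lam k + b *: 1%:M) = b * N%:R.
  move=> a b; rewrite mxtraceD raddf_sum /= big1 ?add0r => [|k _].
    by rewrite mxtraceZ mxtrace1.
  by rewrite mxtraceZ ht mulr0.
have hfree : row_free B.
  apply: inj_row_free => vv; rewrite key => /eqP; rewrite mxvec_eq0 => /eqP h0.
  have hr : rsubmx vv 0 0 = 0.
    have := tr1 (fun k => lsubmx vv 0 k) (rsubmx vv 0 0); rewrite h0 mxtrace0.
    move/esym/eqP; rewrite mulf_eq0 pnatr_eq0 (negbTE (lt0n_neq0 hN)) orbF => /eqP //.
  have hl : lsubmx vv = 0.
    apply/rowP => l; rewrite [RHS]mxE.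
    have h2 : (2 : R[i]) != 0 by rewrite pnatr_eq0.
    have := trl (fun k => lsubmx vv 0 k) (rsubmx vv 0 0) l; rewrite h0 mul0mx mxtrace0.
    by move/esym/eqP; rewrite mulf_eq0 (negbTE h2) orbF => /eqP.
  rewrite -(hsubmxK vv) hl; apply/rowP => j; rewrite !mxE.
  case: splitP => k _; first by rewrite mxE.
  by rewrite ord1 hr.
have hfull : row_full B by move: hfree; rewrite /row_free /row_full => /eqP ->; rewrite hd.
have := submx_full (mxvec M) hfull; case/submxP => u hu.
exists (fun k => lsubmx u 0 k), (rsubmx u 0 0).
by apply: (can_inj mxvecK); rewrite hu key.
Qed.

Lemma bloch_exists (R : realType) (N : nat) (hN : (0 < N)%N)
  (lam : 'I_(N ^ 2 - 1) -> 'M[R[i]]_N) : bloch_basis lam ->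
  forall rho : 'M[R[i]]_N, Defs.hermitian rho -> \tr rho = 1 ->
  exists r, is_bloch_vector lam rho r.
Proof.
move=> hb rho hh ht.
have [a [b hab]] := @span_lam R N hN lam hb rho.
have nN : (N%:R : R[i]) != 0 by rewrite pnatr_eq0 -lt0n.
have n2 : (2 : R[i]) != 0 by rewrite pnatr_eq0.
have hbN : b = (N%:R)^-1.
  have := @tr1_lem R N lam hb a b; rewrite -hab ht => h.
  by apply: (mulIf nN); rewrite mulVf // -h.
have hreal : forall l, a l = (complex.Re (a l))%:C.
  move=> l; apply: conj_real.
  have h2 := @trl_lem R N lam hb a b l; rewrite -hab in h2.
  have : (\tr (rho *m lam l))^* = \tr (rho *m lam l).
    case: hb => hH _.
    by rewrite -tr_adj adjM (hh : adj rho = rho) (hH l : adj (lam l) = lam l) mxtrace_mulC.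
  by rewrite h2 rmorphM rmorph_nat => /(mulIf n2).
exists (fun k => 2 * complex.Re (a k)).
rewrite /is_bloch_vector {1}hab hbN addrC; congr (_ + _).
rewrite scaler_sumr; apply: eq_bigr => k _.
rewrite scalerA rmorphM rmorph_nat.
by rewrite mulrA mulVf // mul1r; congr (_ *: _); exact: hreal.
Qed.

Theorem lemma3 (R : realType) (m : nat) (p : R)
    (lam : 'I_((2 ^ m) ^ 2 - 1) -> 'M[R[i]]_(2 ^ m)) :
  (1 <= m)%N ->
  bloch_basis lam ->
  QRA (2 ^ (2 * m)) m p -> 2^-1 < p ->
  exists (s : 'I_(2 ^ (2 * m)) -> 'I_((2 ^ m) ^ 2 - 1) -> R)
         (c : 'I_(2 ^ (2 * m)) -> R),
    forall w : {ffun 'I_(2 ^ (2 * m)) -> bool},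
      (exists r, region s c w r) /\
      (exists (rho : 'M[R[i]]_(2 ^ m)) (r : 'I_((2 ^ m) ^ 2 - 1) -> R),
          density rho /\ is_bloch_vector lam rho r /\ region s c w r).
Proof.
move=> hm hb [rho [hrho hE]] hp.
have hN : (0 < 2 ^ m)%N by rewrite expn_gt0.
have hE2 : forall i : 'I_(2 ^ (2 * m)), exists E : 'M[R[i]]_(2 ^ m) * 'M[R[i]]_(2 ^ m),
    povm2 E.1 E.2 /\ forall x : {ffun 'I_(2 ^ (2 * m)) -> bool},
      p <= complex.Re (\tr ((if x i then E.2 else E.1) *m rho x)).
  by move=> i; have [E0 [E1 h]] := hE i; exists (E0, E1).
have [E hEi] := fin_all_exists hE2.
pose A i := (E i).1 - (E i).2.
pose s := fun i k => complex.Re (\tr (A i *m lam k)) / 2.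
pose c := fun i => - (complex.Re (\tr (A i)) / (2 ^ m)%:R).
exists s, c => w.
have [r hr] := @bloch_exists R (2 ^ m) hN lam hb (rho w) (hrho w).1.1 (hrho w).2.
suff hreg : region s c w r by split; [exists r | exists (rho w), r].
move=> i.
have [[_ [_ hsum]] hpi] := hEi i.
have Re1 : complex.Re (1 : R[i]) = 1 by [].
have h01 : complex.Re (\tr ((E i).1 *m rho w)) + complex.Re (\tr ((E i).2 *m rho w)) = 1.
  rewrite -ReD -mxtraceD -mulmxDl hsum mul1mx (hrho w).2 //.
have hA : complex.Re (\tr (A i *m rho w)) =
    complex.Re (\tr ((E i).1 *m rho w)) - complex.Re (\tr ((E i).2 *m rho w)).
  by rewrite -ReB /A mulmxBl raddfB.
have eN : ((2 ^ m)%:R : R[i])^-1 = (((2 ^ m)%:R : R)^-1)%:C by rewrite fmorphV rmorph_nat.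
have e2 : (2 : R[i])^-1 = ((2 : R)^-1)%:C by rewrite fmorphV rmorph_nat.
have hdot : dotv r (s i) = complex.Re (\tr (A i *m rho w)) + c i.
  rewrite hr mulmxDr -!scalemxAr mulmx1 mxtraceD !mxtraceZ mulmx_sumr raddf_sum /=.
  rewrite eN e2 ReD !ReMr /dotv /c /s.
  set t := complex.Re (\tr (A i)).
  under eq_bigr => k _ do rewrite -scalemxAr mxtraceZ.
  rewrite Re_sum.
  under [in RHS]eq_bigr => k _ do rewrite ReMr.
  rewrite mulr_sumr.
  rewrite [in RHS](eq_bigr (fun k => r k * (complex.Re (\tr (A i *m lam k)) / 2))) => [|k _]; last first.
    by rewrite mulrCA (mulrC 2^-1).
  rewrite (mulrC _ t) addrAC subrr add0r //.
have hpw := hpi w.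
rewrite hdot hA; split => hw; rewrite hw /= in hpw; lra.
Qed.
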